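(* Let $p$ be a prime and let $\mathcal P$ be the set consisting of $0$, $1$, and all positive integral powers of $p$. Let $G$ be a finite $p$-group of nilpotency class $2$ and $w\in F_k$. Then there exist $t_0,t_1,\dots,t_{k-1}\in\mathcal P$ such that $w$ is $F_k(G)$-automorphic to the word $$x_1^{t_0}[x_1,x_2]^{t_1}[x_2,x_3]^{t_2}\cdots[x_{k-1},x_k]^{t_{k-1}}.$$
   Context: $F_k$ is the free group on $x_1,\dots,x_k$. For a group $G$, each $w\in F_k$ induces a word map $G^k\to G$ by evaluation; the set $F_k(G)$ of all such word maps is a group under pointwise multiplication. Two words $w_1,w_2\in F_k$ are called $F_k(G)$-automorphic if there is a group automorphism of $F_k(G)$ sending the word map of $w_1$ to the word map of $w_2$. Commutators are $[a,b]:=aba^{-1}b^{-1}$. *)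

(* Defs.v *)
From mathcomp Require Import all_boot all_order all_fingroup all_solvable.
Set Implicit Arguments. Unset Strict Implicit. Unset Printing Implicit Defensive.
Local Open Scope group_scope.

(* An element of the free group F_k on x_1..x_k (x_{i+1} is indexed by i : 'I_k)
   is represented by a (not necessarily reduced) word: a list of letters
   (i, false) = x_{i+1} and (i, true) = x_{i+1}^-1.  Every element of F_k is
   represented, and the induced word map only depends on the free group element. *)
Definition word (k : nat) := seq ('I_k * bool).

Section WordMaps.
Variables (gT : finGroupType) (k : nat).

Definition tuples := {ffun 'I_k -> gT}.
Definition fmap := {ffun tuples -> gT}.

Definition eval_letter (x : tuples) (l : 'I_k * bool) : gT :=
  if l.2 then (x l.1)^-1 else x l.1.

Definition eval_word (x : tuples) (w : word k) : gT :=
  foldr (fun l acc => eval_letter x l * acc) 1 w.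

Definition word_map (w : word k) : fmap := [ffun x => eval_word x w].

Definition is_word_map (f : fmap) : Prop := exists w : word k, word_map w = f.

Definition mul_fmap (f g : fmap) : fmap := [ffun x => f x * g x].

Definition is_FkG_automorphism (phi : fmap -> fmap) : Prop :=
  [/\ (forall f, is_word_map f -> is_word_map (phi f)),
      (forall f g, is_word_map f -> is_word_map g ->
          phi (mul_fmap f g) = mul_fmap (phi f) (phi g)),
      (forall f g, is_word_map f -> is_word_map g -> phi f = phi g -> f = g) &
      (forall g, is_word_map g -> exists2 f, is_word_map f & phi f = g)].

Definition FkG_automorphic (w1 w2 : word k) : Prop :=
  exists phi : fmap -> fmap,
    is_FkG_automorphism phi /\ phi (word_map w1) = word_map w2.

End WordMaps.

Definition comm_word k (i j : 'I_k) : word k :=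
  [:: (i, false); (j, false); (i, true); (j, true)].

Definition pred_ord k (i : 'I_k) : 'I_k :=
  Ordinal (leq_ltn_trans (leq_subr 1 i) (ltn_ord i)).

(* for i = 0 : x_1^{t_0};  for i >= 1 : [x_i, x_{i+1}]^{t_i}  (1-based names) *)
Definition block k (t : 'I_k -> nat) (i : 'I_k) : word k :=
  if val i == 0 then nseq (t i) (i, false)
  else flatten (nseq (t i) (comm_word (pred_ord i) i)).

Definition normal_word k (t : 'I_k -> nat) : word k :=
  flatten [seq block t i | i <- enum 'I_k].

Definition in_P (p t : nat) : Prop := t = 0%N \/ exists n : nat, t = (p ^ n)%N.

(* Main.v *)
Require Import Defs.
From mathcomp Require Import all_boot all_order all_fingroup all_solvable zify.
Set Implicit Arguments. Unset Strict Implicit. Unset Printing Implicit Defensive.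
Local Open Scope group_scope.
Section Grp.
Variable gT : finGroupType.
Definition cm_def (a b : gT) := a * b * a^-1 * b^-1.
Fact cm_key : unit. Proof. exact: tt. Qed.
Definition cm := locked_with cm_key cm_def.
Lemma cmd a b : cm a b = a * b * a^-1 * b^-1.
Proof. by rewrite /cm unlock. Qed.

Lemma cent_of_class2 : nil_class [set: gT] = 2%N -> forall a b z : gT, commute (cm a b) z.
Proof.
move=> h a b z.
have : cm a b \in 'Z([set: gT]).
  have: [set: gT]^`(1) \subset 'Z([set: gT]) by rewrite -nil_class2 h.
  move/subsetP; apply; rewrite derg1.
  have -> : cm a b = [~ a^-1, b^-1] by rewrite !cmd /commg /conjg !invgK !mulgA.
  by apply: mem_commg; rewrite inE.
move=> hz; apply: commute_sym; exact: (centerC (in_setT z) hz).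
Qed.

Variable hc : forall a b z : gT, commute (cm a b) z.

Lemma cmE a b : a * b = cm a b * (b * a).
Proof. by rewrite !cmd -!mulgA mulKg mulVg mulg1. Qed.

Lemma cmC a b : cm a b = (cm b a)^-1.
Proof. by rewrite !cmd !invMg !invgK !mulgA. Qed.

Lemma cmaa a : cm a a = 1.
Proof. by rewrite !cmd mulgK mulgV. Qed.

Lemma cm1r a : cm a 1 = 1.
Proof. by rewrite !cmd mulg1 invg1 mulg1 mulgV. Qed.

Lemma cm1l a : cm 1 a = 1.
Proof. by rewrite !cmd mul1g invg1 mulg1 mulgV. Qed.

Lemma cmJ a x : a * x * a^-1 = cm a x * x.
Proof. by rewrite !cmd mulgVK. Qed.

Lemma cmMr a b c : cm a (b * c) = cm a b * cm a c.
Proof.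
have e : a * (b * c) * a^-1 = (a * b * a^-1) * (a * c * a^-1).
  by rewrite !mulgA mulgVK.
have -> : cm a (b * c) = (a * (b * c) * a^-1) * (b * c)^-1 by rewrite !cmd !mulgA.
rewrite (cmJ a b) (cmJ a c) in e; rewrite e invMg !mulgA mulgK.
by rewrite -(mulgA _ b) -(hc a c b) !mulgA mulgK.
Qed.

Lemma cmMl a b c : cm (a * b) c = cm a c * cm b c.
Proof. by rewrite cmC cmMr invMg -!cmC (hc b c). Qed.

Lemma cmVr a b : cm a b^-1 = (cm a b)^-1.
Proof. by apply: (mulgI (cm a b)); rewrite -cmMr mulgV mulgV cm1r. Qed.

Lemma cmVl a b : cm a^-1 b = (cm a b)^-1.
Proof. by rewrite cmC cmVr -cmC. Qed.

Lemma cmXr a b n : cm a (b ^+ n) = cm a b ^+ n.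
Proof. by elim: n => [|n IH]; rewrite ?cm1r // !expgS cmMr IH. Qed.

Lemma cm_central a c : (forall z, commute c z) -> cm a c = 1.
Proof. by move=> h; rewrite !cmd -(h a) mulgK mulgV. Qed.

End Grp.


Section W.
Variables (gT : finGroupType) (k : nat).
Variable hc : forall a b z : gT, commute (cm a b) z.
Local Notation T := (tuples gT k).

Inductive WM (m : nat) : (T -> gT) -> Prop :=
| WM1 : WM m (fun _ => 1)
| WMx (i : 'I_k) : m <= i -> WM m (fun x => x i)
| WMM f g : WM m f -> WM m g -> WM m (fun x => f x * g x)
| WMV f : WM m f -> WM m (fun x => (f x)^-1)
| WMe f g : WM m f -> (forall x, f x = g x) -> WM m g.

Inductive CM (m : nat) : (T -> gT) -> Prop :=
| CM1 : CM m (fun _ => 1)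
| CMc (i j : 'I_k) : m <= i -> m <= j -> CM m (fun x => cm (x i) (x j))
| CMM f g : CM m f -> CM m g -> CM m (fun x => f x * g x)
| CMV f : CM m f -> CM m (fun x => (f x)^-1)
| CMe f g : CM m f -> (forall x, f x = g x) -> CM m g.

Lemma WM_mono m m' f : m' <= m -> WM m f -> WM m' f.
Proof.
move=> hm; elim=> {f} [|i hi|f g _ hf _ hg|f _ hf|f g _ hf e].
- exact: WM1.
- by apply: WMx; apply: leq_trans hi.
- exact: WMM hf hg.
- exact: WMV hf.
- exact: WMe hf e.
Qed.

Lemma CM_mono m m' f : m' <= m -> CM m f -> CM m' f.
Proof.
move=> hm; elim=> {f} [|i j hi hj|f g _ hf _ hg|f _ hf|f g _ hf e].
- exact: CM1.
- by apply: CMc; [apply: leq_trans hi|apply: leq_trans hj].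
- exact: CMM hf hg.
- exact: CMV hf.
- exact: CMe hf e.
Qed.

Lemma WM_pow m f n : WM m f -> WM m (fun x => f x ^+ n).
Proof.
move=> hf; elim: n => [|n IH].
  by apply: WMe (WM1 m) _ => x; rewrite expg0.
by apply: WMe (WMM hf IH) _ => x; rewrite expgS.
Qed.

Lemma CM_central m c : CM m c -> forall x z, commute (c x) z.
Proof.
elim=> {c} [|i j _ _|f g _ hf _ hg|f _ hf|f g _ hf e] x z /=.
- exact/commute_sym/commute1.
- exact: hc.
- by apply/commute_sym/commuteM; apply/commute_sym.
- by apply/commute_sym/commuteV/commute_sym.
- by rewrite -e.
Qed.

Lemma WM_cm_x m v (i : 'I_k) : m <= i -> WM m v -> CM m (fun x => cm (x i) (v x)).
Proof.
move=> hi; elim=> {v} [|j hj|f g _ hf _ hg|f _ hf|f g _ hf e].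
- by apply: CMe (CM1 m) _ => x; rewrite cm1r.
- exact: CMc.
- by apply: CMe (CMM hf hg) _ => x; rewrite cmMr.
- by apply: CMe (CMV hf) _ => x; rewrite cmVr.
- by apply: CMe hf _ => x; rewrite e.
Qed.

Lemma WM_cm m u v : WM m u -> WM m v -> CM m (fun x => cm (u x) (v x)).
Proof.
move=> hu hv; elim: hu => {u} [|j hj|f g _ hf _ hg|f _ hf|f g _ hf e].
- by apply: CMe (CM1 m) _ => x; rewrite cm1l.
- exact: WM_cm_x.
- by apply: CMe (CMM hf hg) _ => x; rewrite cmMl.
- by apply: CMe (CMV hf) _ => x; rewrite cmVl.
- by apply: CMe hf _ => x; rewrite e.
Qed.

Lemma WM_top m f : k <= m -> WM m f -> forall x, f x = 1.
Proof.
move=> hk; elim=> {f} [|i hi|f g _ hf _ hg|f _ hf|f g _ hf e] x //.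
- by have := ltn_ord i; rewrite ltnNge (leq_trans hk hi).
- by rewrite hf hg mulg1.
- by rewrite hf invg1.
- by rewrite -e hf.
Qed.

Lemma CM_top m c : k <= m.+1 -> CM m c -> forall x, c x = 1.
Proof.
move=> hk; elim=> {c} [|i j hi hj|f g _ hf _ hg|f _ hf|f g _ hf e] x //.
- have -> : i = j.
    apply: val_inj; have hi' := ltn_ord i; have hj' := ltn_ord j; simpl; lia.
  exact: cmaa.
- by rewrite hf hg mulg1.
- by rewrite hf invg1.
- by rewrite -e hf.
Qed.


Lemma mulgCA3 (a b c : gT) : commute c b -> a * c * b = a * b * c.
Proof. by move=> h; rewrite -mulgA h mulgA. Qed.

Lemma comm_approx m u v : WM m u -> WM m v ->
  exists c, CM m c /\ forall x, u x * v x = v x * u x * c x.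
Proof.
move=> hu hv; exists (fun x => cm (u x) (v x)); split; first exact: WM_cm.
by move=> x; rewrite cmE hc.
Qed.

Lemma powM m u v n : WM m u -> WM m v ->
  exists c, CM m c /\ forall x, (u x * v x) ^+ n = u x ^+ n * v x ^+ n * c x.
Proof.
move=> hu hv; elim: n => [|n [c [hc' e]]].
  by exists (fun _ => 1); split; [exact: CM1|move=> x; rewrite !expg0 !mulg1].
have [d [hd ed]] := comm_approx (WM_pow n hv) hu.
exists (fun x => d x * c x); split; first exact: CMM.
move=> x; rewrite expgSr e (expgSr (u x)) (expgSr (v x)).
rewrite !mulgA (mulgCA3 _ (CM_central hc' x (u x))) (mulgCA3 _ (CM_central hc' x (v x))).
rewrite -(mulgA (u x ^+ n) (v x ^+ n) (u x)) ed !mulgA.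
by rewrite (mulgCA3 _ (CM_central hd x _)).
Qed.

Lemma invpow (g : gT) n : (g ^+ n)^-1 = g ^+ (n * #|gT|.-1).
Proof.
rewrite expgnA; set h := g ^+ n.
have hN : h ^+ #|gT| = 1 by rewrite -cardsT; apply: expg_cardG; rewrite inE.
have hp : 0 < #|gT| by apply/card_gt0P; exists 1.
apply: (mulgI h); rewrite mulgV -expgS prednK //.
Qed.

Lemma split_lemma (i : 'I_k) y : WM i y ->
  exists a z c, [/\ WM i.+1 z, CM i c & forall x, y x = x i ^+ a * z x * c x].
Proof.
have hi : WM i (fun x => x i) by apply: WMx.
elim=> {y} [|j hj|f g _ [a [z [c [hz hc1 e1]]]] _ [b [z' [c' [hz' hc2 e2]]]]
           |f _ [a [z [c [hz hc1 e1]]]]|f g _ [a [z [c [hz hc1 e1]]]] e].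
- exists 0%N, (fun _ => 1), (fun _ => 1); split; [exact: WM1|exact: CM1|].
  by move=> x; rewrite expg0 !mulg1.
- case: (eqVneq j i) => [->|nji].
    exists 1%N, (fun _ => 1), (fun _ => 1); split; [exact: WM1|exact: CM1|].
    by move=> x; rewrite expg1 !mulg1.
  exists 0%N, (fun x => x j), (fun _ => 1); split; [|exact: CM1|].
    apply: WMx; rewrite ltn_neqAle hj andbT; apply: contra nji => /eqP h.
    by apply/eqP/val_inj.
  by move=> x; rewrite expg0 mul1g mulg1.
- have [d [hd ed]] := comm_approx (WM_mono (leqnSn i) hz) (WM_pow b hi).
  exists (a + b)%N, (fun x => z x * z' x), (fun x => d x * c x * c' x); split.
  + exact: WMM.
  + by apply: CMM; first apply: CMM.
  move=> x; rewrite e1 e2 expgD !mulgA.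
  rewrite (mulgCA3 _ (CM_central hc1 x _)) (mulgCA3 _ (CM_central hc1 x _)).
  rewrite -(mulgA (x i ^+ a) (z x)) ed !mulgA.
  by rewrite (mulgCA3 _ (CM_central hd x _)).
- have hzi : WM i (fun x => (z x)^-1) by apply: WMV; exact: WM_mono (leqnSn i) hz.
  have [d [hd ed]] := comm_approx hzi (WM_pow (a * #|gT|.-1) hi).
  exists (a * #|gT|.-1)%N, (fun x => (z x)^-1), (fun x => d x * (c x)^-1); split.
  + exact: WMV.
  + by apply: CMM => //; apply: CMV.
  move=> x; rewrite e1 !invMg invpow ed !mulgA.
  have hv z0 : commute (c x)^-1 z0 by apply/commute_sym/commuteV/commute_sym/(CM_central hc1).
  by rewrite (hv (x i ^+ _)) (mulgCA3 _ (hv _)) (mulgCA3 _ (hv _)).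
- by exists a, z, c; split => // x; rewrite -e.
Qed.

Definition fixes m (U : T -> T) := forall x (l : 'I_k), l < m -> U x l = x l.
Definition pres m (U : T -> T) := forall l : 'I_k, m <= l -> WM m (fun x => U x l).
Record Mv m (U V : T -> T) : Prop := MvI {
  mv_c1 : cancel U V; mv_c2 : cancel V U; mv_f1 : fixes m U; mv_f2 : fixes m V;
  mv_p1 : pres m U; mv_p2 : pres m V }.

Lemma WM_subst m U f : pres m U -> WM m f -> WM m (fun x => f (U x)).
Proof.
move=> hU; elim=> {f} [|i hi|f g _ hf _ hg|f _ hf|f g _ hf e].
- exact: WM1.
- exact: hU.
- exact: WMM hf hg.
- exact: WMV hf.
- by apply: WMe hf _ => x; rewrite e.
Qed.

Lemma CM_subst m U f : pres m U -> CM m f -> CM m (fun x => f (U x)).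
Proof.
move=> hU; elim=> {f} [|i j hi hj|f g _ hf _ hg|f _ hf|f g _ hf e].
- exact: CM1.
- by apply: WM_cm; apply: hU.
- exact: CMM hf hg.
- exact: CMV hf.
- by apply: CMe hf _ => x; rewrite e.
Qed.

Lemma Mv_id m : Mv m id id.
Proof. by split => // l hl; apply: WMx. Qed.

Lemma Mv_comp m U1 V1 U2 V2 : Mv m U1 V1 -> Mv m U2 V2 ->
  Mv m (fun x => U1 (U2 x)) (fun x => V2 (V1 x)).
Proof.
case=> c1 c1' f1 f1' p1 p1' [c2 c2' f2 f2' p2 p2']; split.
- by move=> x; rewrite c1 c2.
- by move=> x; rewrite c2' c1'.
- by move=> x l hl; rewrite f1 // f2.
- by move=> x l hl; rewrite f2' // f1'.
- by move=> l hl; apply: (WM_subst p2 (p1 l hl)).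
- by move=> l hl; apply: (WM_subst p1' (p2' l hl)).
Qed.

Lemma Mv_weaken m m' U V : m' <= m -> Mv m U V -> Mv m' U V.
Proof.
move=> hm [c1 c2 f1 f2 p1 p2]; split => //.
- by move=> x l hl; apply: f1; apply: leq_trans hm.
- by move=> x l hl; apply: f2; apply: leq_trans hm.
- move=> l hl; case: (ltnP l m) => h.
    by apply: WMe (WMx hl) _ => x; rewrite f1.
  exact: WM_mono hm (p1 l h).
- move=> l hl; case: (ltnP l m) => h.
    by apply: WMe (WMx hl) _ => x; rewrite f2.
  exact: WM_mono hm (p2 l h).
Qed.

Definition tv (i j : 'I_k) (b : bool) (x : T) : T :=
  [ffun l => if l == i then x i * (if b then x j else (x j)^-1) else x l].

Lemma Mv_tv m (i j : 'I_k) : i != j -> m <= i -> m <= j -> Mv m (tv i j false) (tv i j true).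
Proof.
move=> nij hi hj.
have hji : (j == i) = false by apply/negbTE; rewrite eq_sym.
split.
- by move=> x; apply/ffunP => l; rewrite /tv !ffunE; case: eqP => [->|//]; rewrite eqxx hji mulgVK.
- by move=> x; apply/ffunP => l; rewrite /tv !ffunE; case: eqP => [->|//]; rewrite eqxx hji mulgK.
- move=> x l hl; rewrite /tv ffunE; case: eqP => // e; move: hl; rewrite e ltnNge hi //.
- move=> x l hl; rewrite /tv ffunE; case: eqP => // e; move: hl; rewrite e ltnNge hi //.
- move=> l hl; apply: WMe (_ : WM m (fun x => if l == i then x i * (x j)^-1 else x l)) _.
    by case: eqP => _; [apply: WMM; [apply: WMx|apply: WMV; apply: WMx]|apply: WMx].
  by move=> x; rewrite /tv ffunE.
- move=> l hl; apply: WMe (_ : WM m (fun x => if l == i then x i * x j else x l)) _.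
    by case: eqP => _; [apply: WMM; apply: WMx|apply: WMx].
  by move=> x; rewrite /tv ffunE.
Qed.

Definition sw (i j : 'I_k) (x : T) : T := [ffun l => x (tperm i j l)].

Lemma Mv_sw m (i j : 'I_k) : m <= i -> m <= j -> Mv m (sw i j) (sw i j).
Proof.
move=> hi hj.
have cs : cancel (sw i j) (sw i j).
  by move=> x; apply/ffunP => l; rewrite /sw !ffunE tpermK.
have fs : fixes m (sw i j).
  move=> x l hl; rewrite /sw ffunE tpermD //.
    by apply: contraTneq hl => <-; rewrite -leqNgt.
  by apply: contraTneq hl => <-; rewrite -leqNgt.
have ps : pres m (sw i j).
  move=> l hl; apply: WMe (WMx (_ : m <= tperm i j l)) _.
    by case: tpermP => // -> .
  by move=> x; rewrite /sw ffunE.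
by split.
Qed.

Definition pw (i : 'I_k) (u : nat) (x : T) : T :=
  [ffun l => if l == i then x i ^+ u else x l].

Lemma Mv_pw m (i : 'I_k) u u' : m <= i ->
  (forall g : gT, (g ^+ u) ^+ u' = g) -> (forall g : gT, (g ^+ u') ^+ u = g) ->
  Mv m (pw i u) (pw i u').
Proof.
move=> hi h1 h2; split.
- by move=> x; apply/ffunP => l; rewrite /pw !ffunE; case: eqP => [->|//]; rewrite eqxx.
- by move=> x; apply/ffunP => l; rewrite /pw !ffunE; case: eqP => [->|//]; rewrite eqxx.
- move=> x l hl; rewrite /pw ffunE; case: eqP => // e; move: hl; rewrite e ltnNge hi //.
- move=> x l hl; rewrite /pw ffunE; case: eqP => // e; move: hl; rewrite e ltnNge hi //.
- move=> l hl; apply: WMe (_ : WM m (fun x => if l == i then x i ^+ u else x l)) _.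
    by case: eqP => _; [apply: WM_pow; apply: WMx|apply: WMx].
  by move=> x; rewrite /pw ffunE.
- move=> l hl; apply: WMe (_ : WM m (fun x => if l == i then x i ^+ u' else x l)) _.
    by case: eqP => _; [apply: WM_pow; apply: WMx|apply: WMx].
  by move=> x; rewrite /pw ffunE.
Qed.

Lemma expVK (g : gT) a b : a <= b -> (g^-1) ^+ a * g ^+ b = g ^+ (b - a).
Proof. by move=> h; rewrite -{1}(subnKC h) expgD expVgn mulKg. Qed.

Lemma expKV (g : gT) a b : b <= a -> g ^+ a * (g^-1) ^+ b = g ^+ (a - b).
Proof. by move=> h; rewrite -{1}(subnK h) expgD expVgn mulgK. Qed.

Lemma euclid (i j : 'I_k) : i < j -> forall n a b, (a + b <= n)%N ->
  exists U V g c, [/\ Mv i U V, CM i c &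
    forall x, (U x i) ^+ a * (U x j) ^+ b = x i ^+ g * c x].
Proof.
move=> hij.
have hii : i <= i by [].
have hij' : i <= j by apply: ltnW.
have nij : i != j by rewrite neq_ltn hij.
have wi : WM i (fun y => y i) by apply: WMx.
have wj : WM i (fun y => y j) by apply: WMx.
elim=> [|n IH] a b hab.
  exists id, id, 0%N, (fun _ => 1); split; [exact: Mv_id|exact: CM1|].
  by move: hab; rewrite leqn0 addn_eq0 => /andP[/eqP-> /eqP->] x; rewrite !expg0 !mulg1.
case: (posnP b) => [->|bpos].
  exists id, id, a, (fun _ => 1); split; [exact: Mv_id|exact: CM1|].
  by move=> x; rewrite !expg0 !mulg1.
case: (posnP a) => [->|apos].
  exists (sw i j), (sw i j), b, (fun _ => 1); split; [exact: Mv_sw|exact: CM1|].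
  by move=> x; rewrite /sw !ffunE tpermL tpermR expg0 mul1g mulg1.
case: (leqP a b) => hle.
  have [U2 [V2 [g [c2 [hM hc2 e2]]]]] := IH a (b - a) (ltac:(move: hab; lia)).
  have [d [hd ed]] := powM a wi (WMV wj).
  exists (fun x => tv i j false (U2 x)), (fun x => V2 (tv i j true x)), g,
    (fun x => c2 x * d (U2 x)); split.
  + exact: Mv_comp (Mv_tv nij hii hij') hM.
  + by apply: CMM => //; apply: CM_subst (mv_p1 hM) hd.
  move=> x; rewrite /tv !ffunE eqxx eq_sym (negbTE nij) ed.
  rewrite -mulgA (CM_central hd _ _) mulgA -(mulgA (U2 x i ^+ a)) expVK // e2.
  by rewrite !mulgA.
have [U2 [V2 [g [c2 [hM hc2 e2]]]]] := IH (a - b) b (ltac:(move: hab; lia)).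
have [d [hd ed]] := powM b wj (WMV wi).
have [d' [hd' ed']] := comm_approx (WM_pow b wj) (WM_pow b (WMV wi)).
have nji : j != i by rewrite eq_sym.
exists (fun x => tv j i false (U2 x)), (fun x => V2 (tv j i true x)), g,
  (fun x => c2 x * (d' (U2 x) * d (U2 x))); split.
+ exact: Mv_comp (Mv_tv nji hij' hii) hM.
+ by apply: CMM => //; apply: CMM; apply: CM_subst (mv_p1 hM) _.
move=> x; rewrite /tv !ffunE eqxx (negbTE nij) ed !mulgA.
rewrite -(mulgA (U2 x i ^+ a)) ed' !mulgA expKV 1?ltnW //.
rewrite (mulgCA3 _ (CM_central hd' _ _)) e2.
by rewrite (mulgCA3 _ (CM_central hd _ _)).
Qed.

Lemma reduce_raw n : forall (i : 'I_k) y, k - i <= n -> WM i y ->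
  exists U V g c, [/\ Mv i U V, CM i c & forall x, y (U x) = x i ^+ g * c x].
Proof.
elim: n => [|n IH] i y hn hy.
  by move: hn (ltn_ord i); rewrite leqn0 subn_eq0 => /leq_ltn_trans h /h; rewrite ltnn.
have [a [z [c [hz hc1 e1]]]] := split_lemma hy.
case: (ltnP i.+1 k) => hik; last first.
  exists id, id, a, c; split; [exact: Mv_id|exact: hc1|].
  by move=> x; rewrite e1 (WM_top hik hz) mulg1.
pose j := Ordinal hik.
have hij : i < j by [].
have [U1 [V1 [b [c1 [hM1 hc1' e1']]]]] := IH j z (ltac:(rewrite /=; move: hn; lia)) hz.
have [U2 [V2 [g [c2 [hM2 hc2 e2]]]]] := euclid hij (leqnn (a + b)).
have hM := Mv_comp (Mv_weaken (ltnW hij) hM1) hM2.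
exists (fun x => U1 (U2 x)), (fun x => V2 (V1 x)), g,
  (fun x => c2 x * c1 (U2 x) * c (U1 (U2 x))); split => //.
  apply: CMM; first apply: CMM => //.
    exact: CM_subst (mv_p1 hM2) (CM_mono (ltnW hij) hc1').
  exact: CM_subst (mv_p1 hM) hc1.
move=> x; rewrite e1 e1' (mv_f1 hM1) //.
by rewrite !mulgA e2.
Qed.

Lemma reduce p (i : 'I_k) y : prime p -> p.-group [set: gT] -> WM i y ->
  exists U V t c, [/\ Mv i U V, CM i c, in_P p t & forall x, y (U x) = x i ^+ t * c x].
Proof.
move=> pp pg hy.
have [U [V [g [c [hM hcc e]]]]] := reduce_raw (leqnn (k - i)) hy.
case: (posnP g) => [g0|gpos].
  by exists U, V, 0%N, c; split => //; [left|move=> x; rewrite e g0].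
have [u cpu eg] := pfactor_coprime pp gpos.
set ee := logn p g in eg.
have cu : coprime #|[set: gT]| u.
  by rewrite (card_pgroup pg) coprimeXl.
set u' := expg_invn [set: gT] u.
have h1 : forall g0 : gT, (g0 ^+ u) ^+ u' = g0.
  by move=> g0; apply: (expgK (G := [set: gT]%G) cu); rewrite inE.
have h2 : forall g0 : gT, (g0 ^+ u') ^+ u = g0 by move=> g0; rewrite expgnAC h1.
have hP := Mv_pw (leqnn i) h2 h1.
exists (fun x => U (pw i u' x)), (fun x => pw i u (V x)), (p ^ ee)%N, (fun x => c (pw i u' x)).
split.
- exact: Mv_comp hM hP.
- exact: CM_subst (mv_p1 hP) hcc.
- by right; exists ee.
by move=> x; rewrite e /pw ffunE eqxx eg expgnA h2.
Qed.

Lemma decomp (q : 'I_k) D : CM q D -> exists y D',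
  [/\ WM q.+1 y, CM q.+1 D' & forall x, D x = cm (x q) (y x) * D' x].
Proof.
elim=> {D} [|i j hi hj|f g _ [y1 [D1 [hy1 hD1 e1]]] _ [y2 [D2 [hy2 hD2 e2]]]
           |f _ [y1 [D1 [hy1 hD1 e1]]]|f g _ [y1 [D1 [hy1 hD1 e1]]] e].
- exists (fun _ => 1), (fun _ => 1); split; [exact: WM1|exact: CM1|].
  by move=> x; rewrite cm1r mulg1.
- case: (eqVneq i q) => [->|niq]; case: (eqVneq j q) => [->|njq].
  + exists (fun _ => 1), (fun _ => 1); split; [exact: WM1|exact: CM1|].
    by move=> x; rewrite cm1r cmaa mulg1.
  + exists (fun x => x j), (fun _ => 1); split; [|exact: CM1|].
      apply: WMx; rewrite ltn_neqAle hj andbT; apply: contra njq => /eqP h.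
      by apply/eqP/val_inj.
    by move=> x; rewrite mulg1.
  + exists (fun x => (x i)^-1), (fun _ => 1); split; [|exact: CM1|].
      apply: WMV; apply: WMx; rewrite ltn_neqAle hi andbT; apply: contra niq => /eqP h.
      by apply/eqP/val_inj.
    by move=> x; rewrite mulg1 cmVr //; apply: cmC.
  + exists (fun _ => 1), (fun x => cm (x i) (x j)); split; [exact: WM1| |].
      apply: CMc.
        by rewrite ltn_neqAle hi andbT; apply: contra niq => /eqP h; apply/eqP/val_inj.
      by rewrite ltn_neqAle hj andbT; apply: contra njq => /eqP h; apply/eqP/val_inj.
    by move=> x; rewrite cm1r mul1g.
- exists (fun x => y1 x * y2 x), (fun x => D1 x * D2 x); split.
  + exact: WMM.
  + exact: CMM.
  move=> x; rewrite e1 e2 cmMr // !mulgA; congr (_ * _).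
  by rewrite -!mulgA; congr (_ * _); rewrite hc.
- exists (fun x => (y1 x)^-1), (fun x => (D1 x)^-1); split.
  + exact: WMV.
  + exact: CMV.
  move=> x; rewrite e1 invMg cmVr //.
  by apply: (commute_sym (commuteV (commute_sym (CM_central hD1 x _)))) .
- by exists y1, D1; split => // x; rewrite -e.
Qed.

Definition xv (x : T) (l : nat) : gT := if insub l is Some o then x o else 1.

Lemma xvE x (o : 'I_k) : xv x o = x o.
Proof. by rewrite /xv valK. Qed.

Definition blk (t : nat -> nat) (x : T) (l : nat) : gT :=
  if l == 0%N then xv x l ^+ t l else cm (xv x l.-1) (xv x l) ^+ t l.

Definition Pref t n x := \prod_(0 <= l < n) blk t x l.

Lemma xv_fix m (U : T -> T) x : fixes m U -> forall l, l < m -> xv (U x) l = xv x l.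
Proof.
move=> hU l hl; rewrite /xv; case: insubP => // o _ e; by apply: hU; rewrite e.
Qed.

Lemma Pref_fix m (U : T -> T) t n x : fixes m U -> n <= m -> Pref t n (U x) = Pref t n x.
Proof.
move=> hU hn; apply: eq_big_nat => l /andP[_ hl]; rewrite /blk.
have hl' : l < m by apply: leq_trans hl hn.
rewrite !(xv_fix x hU hl') (xv_fix x hU (leq_ltn_trans (leq_pred l) hl')) //.
Qed.

Lemma Pref_eqt t t' n x : (forall l, l < n -> t l = t' l) -> Pref t n x = Pref t' n x.
Proof.
move=> h; apply: eq_big_nat => l /andP[_ hl]; by rewrite /blk h.
Qed.

Definition Rel (f g : T -> gT) := exists U V, Mv 0 U V /\ forall x, g x = f (U x).

Lemma Rel_trans f g h : Rel f g -> Rel g h -> Rel f h.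
Proof.
move=> [U1 [V1 [h1 e1]]] [U2 [V2 [h2 e2]]].
exists (fun x => U1 (U2 x)), (fun x => V2 (V1 x)); split; first exact: Mv_comp.
by move=> x; rewrite e2 e1.
Qed.

Lemma Rel_ext f g g' : Rel f g -> (forall x, g x = g' x) -> Rel f g'.
Proof. by move=> [U [V [h e]]] e'; exists U, V; split => // x; rewrite -e' e. Qed.

Lemma Rel_Mv m f U V : Mv m U V -> Rel f (fun x => f (U x)).
Proof. by move=> h; exists U, V; split => //; apply: Mv_weaken h. Qed.

Lemma loop p f0 (pp : prime p) (pg : p.-group [set: gT]) n : forall (q : 'I_k) t D,
  k - q <= n -> (forall l, in_P p (t l)) -> CM q D ->
  Rel f0 (fun x => Pref t q.+1 x * D x) ->
  exists t', (forall l, in_P p (t' l)) /\ Rel f0 (Pref t' k).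
Proof.
elim: n => [|n IH] q t D hn ht hD hR.
  by move: hn (ltn_ord q); rewrite leqn0 subn_eq0 => /leq_ltn_trans h /h; rewrite ltnn.
case: (ltnP q.+1 k) => hqk; last first.
  exists t; split => //; apply: Rel_ext hR _ => x.
  rewrite (CM_top hqk hD) mulg1; congr (Pref t _ x).
  by apply/eqP; rewrite eqn_leq hqk ltn_ord.
pose j := Ordinal hqk.
have [y [D' [hy hD' eD]]] := decomp hD.
have [U [V [g [c [hM hcc hg ec]]]]] := reduce (i := j) pp pg hy.
pose t' := fun l => if l == q.+1 then g else t l.
have ht' : forall l, in_P p (t' l) by move=> l; rewrite /t'; case: eqP.
apply: (IH j t' (fun x => D' (U x))) => //.
- by rewrite /=; move: hn; lia.
- exact: CM_subst (mv_p1 hM) hD'.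
apply: Rel_trans hR _; apply: Rel_ext (Rel_Mv _ hM) _ => x.
rewrite (Pref_fix t _ (mv_f1 hM)) // eD (mv_f1 hM) //= ec.
have -> : Pref t' q.+2 x = Pref t' q.+1 x * blk t' x q.+1 by rewrite /Pref big_nat_recr.
rewrite (@Pref_eqt t' t); last by move=> l hl; rewrite /t' ifF // ltn_eqF.
rewrite [blk t' x q.+1]/blk /= /t' eqxx cmMr // (cm_central _ (CM_central hcc x)) mulg1 cmXr //.
by rewrite (xvE x q) (xvE x j) mulgA.
Qed.

Lemma eval_cat (x : T) (w1 w2 : word k) : eval_word x (w1 ++ w2) = eval_word x w1 * eval_word x w2.
Proof. by elim: w1 => [|l w IH] /=; rewrite ?mul1g // IH mulgA. Qed.

Lemma word_WM (w : word k) : WM 0 (fun x => eval_word x w).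
Proof.
elim: w => [|[i b] w IH] /=; first exact: WM1.
apply: WMM => //; rewrite /eval_letter /=; case: b.
  by apply: WMV; apply: WMx.
exact: WMx.
Qed.

Definition flip (l : 'I_k * bool) := (l.1, ~~ l.2).

Lemma eval_flip (x : T) (w : word k) : eval_word x (rev (map flip w)) = (eval_word x w)^-1.
Proof.
elim: w => [|l w IH] /=; first by rewrite invg1.
rewrite rev_cons -cats1 eval_cat IH /= mulg1 invMg; congr (_ * _).
by rewrite /eval_letter /=; case: l.2; rewrite ?invgK.
Qed.

Lemma WM_word m f : WM m f -> exists w : word k, forall x, eval_word x w = f x.
Proof.
elim=> {f} [|i hi|f g _ [w1 e1] _ [w2 e2]|f _ [w1 e1]|f g _ [w1 e1] e].
- by exists [::].
- by exists [:: (i, false)] => x /=; rewrite mulg1.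
- by exists (w1 ++ w2) => x; rewrite eval_cat e1 e2.
- by exists (rev (map flip w1)) => x; rewrite eval_flip e1.
- by exists w1 => x; rewrite e1 e.
Qed.

Lemma Rel_auto (w1 w2 : word k) :
  Rel (fun x => eval_word x w1) (fun x => eval_word x w2) -> FkG_automorphic gT w1 w2.
Proof.
move=> [U [V [hM e]]].
have wmap : forall f : T -> gT, WM 0 f -> is_word_map [ffun x => f x].
  move=> f /WM_word [w ew]; exists w; apply/ffunP => x; by rewrite !ffunE.
have wmapWM : forall F : fmap gT k, is_word_map F -> WM 0 (fun x => F x).
  move=> F [w <-]; apply: WMe (word_WM w) _ => x; by rewrite ffunE.
exists (fun F : fmap gT k => [ffun x => F (U x)]); split; last first.
  by apply/ffunP => x; rewrite !ffunE e.
split.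
- move=> F /wmapWM hF; exact: wmap _ (WM_subst (mv_p1 hM) hF).
- by move=> F G _ _; apply/ffunP => x; rewrite !ffunE.
- move=> F G _ _ hFG; apply/ffunP => x.
  have := congr1 (fun H : fmap gT k => H (V x)) hFG; rewrite /= !ffunE.
  by rewrite (mv_c2 hM).
- move=> G /wmapWM hG; exists [ffun x => G (V x)].
    exact: wmap _ (WM_subst (mv_p2 hM) hG).
  by apply/ffunP => x; rewrite !ffunE (mv_c1 hM).
Qed.

Lemma eval_nseq (x : T) n (l : 'I_k * bool) : eval_word x (nseq n l) = eval_letter x l ^+ n.
Proof. by elim: n => [|n IH] /=; rewrite ?expg0 // IH expgS. Qed.

Lemma eval_fnseq (x : T) n (w : word k) : eval_word x (flatten (nseq n w)) = eval_word x w ^+ n.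
Proof. by elim: n => [|n IH] /=; rewrite ?expg0 // eval_cat IH expgS. Qed.

Lemma eval_normal (t : 'I_k -> nat) (tt : nat -> nat) :
  (forall i : 'I_k, t i = tt i) -> forall x, eval_word x (normal_word t) = Pref tt k x.
Proof.
move=> ht x; rewrite /normal_word /Pref.
have -> : forall s : seq 'I_k, eval_word x (flatten [seq block t i | i <- s]) =
    \prod_(i <- s) eval_word x (block t i).
  elim=> [|i s IH] /=; first by rewrite big_nil.
  by rewrite eval_cat IH big_cons.
rewrite enumT big_mkord [index_enum _]unlock; apply: eq_bigr => i _.
rewrite /block /blk ht; case: eqP => hi.
  by rewrite eval_nseq /eval_letter /= xvE.
rewrite eval_fnseq /comm_word /= /eval_letter /= !mulg1 cmd !mulgA xvE.
have -> : (val i).-1 = val (pred_ord i) by rewrite /= subn1.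
by rewrite xvE.
Qed.

End W.

Theorem theorem2p7 (p : nat) (gT : finGroupType) (k : nat) (w : word k) :
  prime p -> (p.-group [set: gT])%g -> nil_class [set: gT] = 2 -> 0 < k ->
  exists t : 'I_k -> nat,
    (forall i, in_P p (t i)) /\ FkG_automorphic gT w (normal_word t).
Proof.
move=> pp pg hcl kpos.
have hc := cent_of_class2 hcl.
pose i0 : 'I_k := Ordinal kpos.
have [U [V [g [c [hM hcc hg e]]]]] := @reduce gT k hc p i0 _ pp pg (@word_WM gT k w).
pose tt := fun l : nat => if l == 0%N then g else 0%N.
have htt : forall l, in_P p (tt l) by move=> l; rewrite /tt; case: eqP => _ //; left.
have hR0 : Rel (fun x => eval_word x w) (fun x => Pref tt i0.+1 x * c x).
  apply: Rel_ext (Rel_Mv _ hM) _ => x.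
  by rewrite e /Pref big_nat1 /blk /= /tt /= (xvE x i0).
have [t' [ht' hR]] := @loop gT k hc p (fun x => eval_word x w) pp pg k i0 tt c
  (leq_subr _ _) htt hcc hR0.
exists (fun i : 'I_k => t' i); split => //.
apply: Rel_auto; apply: Rel_ext hR _ => x.
by rewrite (eval_normal (tt := t')).
Qed.
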